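(* Let $T$ be a tree with $n$ vertices and matching number $\beta$. Then $$S_{k}(A(T))\leq \begin{cases} \sqrt{k(n-1)}, & \text{if } 1\leq k \leq \beta;\\ \sqrt{\beta (n-1)}, & \text{if } \beta< k \leq n-\beta;\\ \sqrt{(n-k)(n-1)}, & \text{if } n-\beta< k \leq n. \end{cases}$$
   Context: $A(T)$ is the adjacency matrix of $T$. For a real symmetric matrix $M$ with eigenvalues $\lambda_1(M)\geq\cdots\geq\lambda_n(M)$, $S_k(M)=\sum_{i=1}^k\lambda_i(M)$. The matching number is the maximum size of a matching. *)

(* Defs.v *)
From mathcomp Require Import all_boot all_order all_algebra.
From mathcomp Require Import reals.
Set Implicit Arguments. Unset Strict Implicit. Unset Printing Implicit Defensive.
Import Order.TTheory GRing.Theory Num.Theory.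
Local Open Scope ring_scope.

Definition simple_graph (n : nat) (e : rel 'I_n) : Prop :=
  symmetric e /\ irreflexive e.

Definition has_cycle (n : nat) (e : rel 'I_n) : Prop :=
  exists c : seq 'I_n, [/\ (3 <= size c)%N, uniq c & cycle e c].

Definition connected_graph (n : nat) (e : rel 'I_n) : Prop :=
  forall x y : 'I_n, connect e x y.

Definition is_tree (n : nat) (e : rel 'I_n) : Prop :=
  [/\ (0 < n)%N, simple_graph e, connected_graph e & ~ has_cycle e].

Definition is_matching (n : nat) (e : rel 'I_n) (M : {set 'I_n * 'I_n}) : bool :=
  [forall p in M, (p.1 < p.2)%N && e p.1 p.2] &&
  [forall p in M, forall q in M,
     (p != q) ==> [&& p.1 != q.1, p.1 != q.2, p.2 != q.1 & p.2 != q.2]].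

Definition matching_number (n : nat) (e : rel 'I_n) : nat :=
  \max_(M : {set 'I_n * 'I_n} | is_matching e M) #|M|.

Definition adj_mx (R : nzRingType) (n : nat) (e : rel 'I_n) : 'M[R]_n :=
  \matrix_(i, j) (e i j)%:R.

Definition eigenvalues_desc (R : realType) (n : nat) (A : 'M[R]_n) (s : seq R) : Prop :=
  sorted (fun x y : R => y <= x) s /\
  char_poly A = \prod_(x <- s) ('X - x%:P).

Definition Ssum (R : realType) (s : seq R) (k : nat) : R :=
  \sum_(i < k) s`_i.

(* Main.v *)
Require Import Defs.
From mathcomp Require Import all_boot all_order all_algebra.
From mathcomp Require Import reals.
From mathcomp Require Import all_fingroup zify ring lra.
Set Implicit Arguments. Unset Strict Implicit. Unset Printing Implicit Defensive.

Lemma exists_leaf n (e : rel 'I_n) (V : {set 'I_n}) :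
  symmetric e -> irreflexive e -> ~ has_cycle e -> V != set0 ->
  exists2 v, v \in V & #|[set u in V | e v u]| <= 1.
Proof.
move=> esym eirr noc V0.
case: (pickP [pred v | (v \in V) && (#|[set u in V | e v u]| <= 1)]) => [v /andP[vV lf]|Hall]; first by exists v.
have H2 : forall v, v \in V -> 1 < #|[set u in V | e v u]|.
  by move=> v vV; move: (Hall v); rewrite /= vV /= ltnNge => ->.
have claim : forall m, exists x, exists p,
   [/\ path e x p, uniq (x :: p), all (mem V) (x :: p) & size p = m].
  elim=> [|m [x [p [pth un alV sz]]]].
    case/set0Pn: V0 => x xV; exists x, [::]; split => //=; by rewrite xV.
  have xV : x \in V by move: alV => /= /andP[].
  have : 0 < #|[set u in V | e x u] :\ head x p|.
    have := H2 x xV; rewrite (cardsD1 (head x p)); move: (_ \in _) => b; case: b => /=; rewrite ?add1n ?add0n ?ltnS //; exact: ltnW.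
  case/card_gt0P => y; rewrite !inE => /andP[yz /andP[yV exy]].
  have yx : y != x by apply: contraTneq exy => ->; rewrite eirr.
  case yin : (y \in x :: p).
    exfalso; apply: noc.
    move: yin; rewrite inE (negbTE yx) /= => yp.
    case/splitPr: yp pth un alV sz yz => p1 p2 pth un _ _ yz.
    case: p1 pth un yz => [|a p1] pth un yz.
      by rewrite /= eqxx in yz.
    exists (x :: a :: rcons p1 y); split.
    - by rewrite /= size_rcons.
    - move: un; rewrite -cat_rcons -cat_cons cat_uniq => /andP[//].
    - rewrite /cycle /= rcons_path.
      move: pth; rewrite -cat_rcons cat_path => /andP[p1p _].
      rewrite /= in p1p; rewrite andbA p1p /= last_rcons esym //.
  exists y, (x :: p); split => //=.
  - by rewrite esym exy.
  - by rewrite yin.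
  - by rewrite yV.
  - by rewrite sz.
have [x [p [_ un alV sz]]] := claim #|V|.
have : size (x :: p) <= #|V|.
  rewrite -(@card_uniqP _ (x :: p) un); apply: subset_leq_card; apply/subsetP => y yin.
  by move/allP: alV => /(_ y yin).
by rewrite /= sz ltnn.
Qed.

Lemma card_pred_sum (T : finType) (A : {set T}) (P : pred T) :
  #|[set u in A | P u]| = \sum_(u in A) (P u : nat).
Proof.
rewrite -sum1_card (eq_bigl (fun u => (u \in A) && P u)); last by move=> u; rewrite inE.
by rewrite big_mkcondr /=; apply: eq_bigr => u _; case: (P u).
Qed.

Lemma edge_sum n (e : rel 'I_n) (V : {set 'I_n}) :
  symmetric e -> irreflexive e -> ~ has_cycle e -> V != set0 ->
  \sum_(v in V) #|[set u in V | e v u]| <= 2 * (#|V| - 1).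
Proof.
move=> esym eirr noc.
have [k] := ubnP #|V|; elim: k V => // k IH V ltV V0.
have [v vV lf] := exists_leaf esym eirr noc V0.
set V' := V :\ v.
have cV : #|V| = (#|V'|).+1 by rewrite (cardsD1 v) vV.
have degE : forall u, u \in V' ->
   #|[set w in V | e u w]| = #|[set w in V' | e u w]| + e u v.
  move=> u uV'; rewrite (cardsD1 v) inE vV /= addnC; congr (_ + _).
  by apply: eq_card => w; rewrite !inE andbA.
rewrite (bigD1 v) //= (eq_bigl (fun u => u \in V')); last first.
  by move=> u; rewrite !inE andbC.
rewrite (eq_bigr (fun u => #|[set w in V' | e u w]| + e u v)); last first.
  by move=> u uV'; rewrite degE.
rewrite big_split /=.
have H1 : \sum_(i in V') (e i v : nat) <= 1.
  rewrite -card_pred_sum; apply: leq_trans lf; apply: subset_leq_card.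
  by apply/subsetP => u; rewrite !inE esym => /andP[/andP[_ ->] ->].
case: (eqVneq V' set0) => [V'0|V'n0].
  have -> : #|[set u in V | e v u]| = 0.
    apply/eqP; rewrite cards_eq0; apply/eqP/setP => u; rewrite !inE.
    apply/negbTE; apply/negP => /andP[uV evu].
    have : u \in V' by rewrite !inE uV andbT; apply: contraTneq evu => ->; rewrite eirr.
    by rewrite V'0 inE.
  rewrite V'0 big_set0 /=.
  move: H1; rewrite V'0 big_set0; lia.
have IH' := IH V' _ V'n0.
have : #|V'| < k by move: ltV; rewrite cV.
move=> /IH' {}IH'.
have : 0 < #|V'| by rewrite card_gt0.
move: IH' H1 lf; rewrite cV.
set a := \sum_(i in V') #|_|; set b := \sum_(i in V') _; set c := #|_|.
move=> h1 h2 h3 h4; set d := #|[set u in V | e v u]| in h3 *; lia.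
Qed.

Lemma perm_invol n (e : rel 'I_n) (s : 'S_n) :
  ~ has_cycle e -> (forall i, s i != i -> e i (s i)) -> forall i, s (s i) = i.
Proof.
move=> noc He i; apply/eqP/negPn/negP => ssi.
have si : s i != i by apply: contraNneq ssi => H; rewrite !H.
apply: noc; exists (fingraph.orbit s i); split.
- have : uniq [:: i; s i; s (s i)].
    rewrite /= !inE negb_or eq_sym si eq_sym ssi /= andbT.
    by apply: contra si => /eqP/perm_inj/esym/eqP.
  move/(@uniq_leq_size _ _ (fingraph.orbit s i)) => /= -> //.
  move=> y; rewrite !inE => /or3P[] /eqP ->; first exact: fingraph.in_orbit.
    by apply: fingraph.mem_orbit; apply: fingraph.in_orbit.
  by do 2 apply: fingraph.mem_orbit; apply: fingraph.in_orbit.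
- exact: fingraph.orbit_uniq.
- apply: (@sub_in_cycle _ (mem (fingraph.orbit s i)) (frel s)); last 2 first.
  + by apply/allP.
  + by apply: fingraph.cycle_orbit; apply: perm_inj.
  move=> x y xin _ /eqP <-; apply: He; apply/negP => /eqP sx.
  have : fconnect s x i.
    by rewrite fconnect_sym; [rewrite fingraph.fconnect_orbit | exact: perm_inj].
  move=> /iter_findex.
  have -> : forall k, iter k s x = x by elim=> //= k ->.
  by move=> xi; rewrite -xi sx eqxx in si.
Qed.

Lemma moved_count n (e : rel 'I_n) (s : 'S_n) :
  ~ has_cycle e -> (forall i, s i != i -> e i (s i)) ->
  exists j, #|[set i | s i != i]| = j.*2 /\ j <= matching_number e.
Proof.
move=> noc He; have inv := perm_invol noc He.
set L := [set i : 'I_n | (i < s i)%N].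
exists #|L|; split.
  have -> : [set i | s i != i] = L :|: s @: L.
    apply/setP => j; rewrite !inE; apply/idP/orP.
      rewrite neq_ltn => /orP[lt|lt]; [right|left => //].
      by apply/imsetP; exists (s j); rewrite ?inE ?inv.
    case=> [lt|/imsetP[i]]; first by rewrite eq_sym neq_ltn lt.
    by rewrite inE => lt ->; rewrite inv neq_ltn lt.
  rewrite cardsU card_imset; last exact: perm_inj.
  have -> : L :&: s @: L = set0.
    apply/setP => j; rewrite !inE; apply/negbTE/negP => /andP[lt /imsetP[i]].
    rewrite inE => lt' ej; move: lt; rewrite ej inv => lt.
    by have := ltn_trans lt lt'; rewrite ltnn.
  by rewrite cards0 subn0 addnn.
set M := [set (i, s i) | i in L].
have cM : #|M| = #|L|.
  by rewrite card_imset // => i k [].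
rewrite -cM /matching_number.
apply: (@leq_bigmax_cond _ (fun M => is_matching e M) (fun M => #|M|)).
apply/andP; split.
  apply/forall_inP => p /imsetP[i]; rewrite inE => lt -> /=.
  by rewrite lt He // eq_sym neq_ltn lt.
apply/forall_inP => p /imsetP[i]; rewrite inE => lti ->.
apply/forall_inP => q /imsetP[k]; rewrite inE => ltk -> /=.
apply/implyP => neq.
have ik : i != k by apply: contraNneq neq => ->.
have H1 : forall a b : 'I_n, (a < s a)%N -> (b < s b)%N -> a != s b.
  move=> a b la lb; apply/eqP => ab; move: la; rewrite ab inv => la.
  by have := ltn_trans la lb; rewrite ltnn.
rewrite ik H1 // eq_sym H1 //=.
by apply: contra ik => /eqP/perm_inj ->.
Qed.

Import Order.TTheory GRing.Theory Num.Theory.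
Local Open Scope ring_scope.

Lemma term_shape (R : realType) n (e : rel 'I_n) (s : 'S_n) :
  irreflexive e -> ~ has_cycle e ->
  exists c : R, exists j, [/\ (j <= matching_number e)%N, (j.*2 <= n)%N &
   (-1) ^+ s * \prod_i (char_poly_mx (adj_mx R e)) i (s i) = c%:P * 'X^(n - j.*2)].
Proof.
move=> eirr noc.
have entry : forall i k, (char_poly_mx (adj_mx R e)) i k =
    'X *+ (i == k) - ((e i k)%:R)%:P.
  by move=> i k; rewrite !mxE.
case: (pickP [pred i | (s i != i) && ~~ e i (s i)]) => [i /andP[si ne]|Hn].
  exists 0, 0%N; split => //.
  rewrite (bigD1 i) //= entry (negbTE ne) eq_sym (negbTE si) /=.
  by rewrite mulr0n sub0r oppr0 mul0r mulr0 mul0r.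
have He : forall i, s i != i -> e i (s i).
  by move=> i si; move: (Hn i) => /=; rewrite si /= => /negbFE.
have [j [cj jle]] := moved_count noc He.
have jn : (j.*2 <= n)%N.
  by rewrite -cj -[X in (_ <= X)%N]card_ord; apply: max_card.
exists ((-1) ^+ s * (-1) ^+ j.*2), j; split => //.
rewrite (bigID (fun i => s i == i)) /=.
rewrite (eq_bigr (fun _ => 'X)); last first.
  by move=> i /eqP si; rewrite entry si eqxx eirr /= mulr1n subr0.
rewrite [X in _ * (_ * X)](eq_bigr (fun _ => -1)); last first.
  by move=> i si; rewrite entry eq_sym (negbTE si) He // mulr0n sub0r.
rewrite !prodr_const.
have -> : #|[pred i | s i != i]| = j.*2.
  by rewrite -cj; apply: eq_card => i; rewrite !inE.
have -> : #|[pred i | s i == i]| = (n - j.*2)%N.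
  have h := cardsC [set i | s i != i]; rewrite card_ord cj in h.
  have -> : #|[pred i | s i == i]| = #|~: [set i | s i != i]|.
    by apply: eq_card => i; rewrite !inE negbK.
  by apply: (@addnI j.*2); rewrite h subnKC.
by rewrite polyCM !polyC_exp polyCN polyC1 -mulrA [X in _ * X]mulrC.
Qed.

Lemma poly_eq_nonneg (R : realType) (p q : {poly R}) :
  (forall t, 0 <= t -> p.[t] = q.[t]) -> p = q.
Proof.
move=> H; apply/eqP; rewrite -subr_eq0; apply/eqP.
apply: (@roots_geq_poly_eq0 _ _ [seq i%:R | i <- iota 0 (size (p - q))]).
- apply/allP => x /mapP[i _ ->]; rewrite /root !hornerE H ?subrr //.
- rewrite map_inj_uniq ?iota_uniq //; by move=> a b /eqP; rewrite eqr_nat => /eqP.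
- by rewrite size_map size_iota.
Qed.

Lemma char_expand (R : realType) n (A : 'M[R]_n) :
  char_poly A = \sum_(s : 'S_n) (-1) ^+ s * \prod_i (char_poly_mx A) i (s i).
Proof. by []. Qed.

Lemma horner_char (R : realType) n (A : 'M[R]_n) t :
  (char_poly A).[t] = \det (t%:M - A).
Proof.
rewrite /char_poly -[_.[t]]/(horner_eval t _) -det_map_mx; congr (\det _).
by apply/matrixP => i j; rewrite mxE /= !mxE /horner_eval /= !hornerE hornerMn hornerX.
Qed.

Lemma X_dvd_char (R : realType) n (e : rel 'I_n) :
  irreflexive e -> ~ has_cycle e ->
  'X^(n - (matching_number e).*2) %| char_poly (adj_mx R e).
Proof.
move=> eirr noc; rewrite char_expand.
apply: (@big_ind _ (fun p : {poly R} => 'X^(n - (matching_number e).*2) %| p)).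
  by rewrite dvdp0.
  by move=> p q; apply: dvdp_add.
move=> s _; have [c [j [jb jn ->]]] := term_shape R s eirr noc.
apply: dvdp_mull; apply: dvdp_exp2l.
by apply: leq_sub2l; rewrite leq_double.
Qed.

Lemma char_odd (R : realType) n (e : rel 'I_n) t :
  irreflexive e -> ~ has_cycle e ->
  (char_poly (adj_mx R e)).[- t] = (-1) ^+ n * (char_poly (adj_mx R e)).[t].
Proof.
move=> eirr noc; rewrite char_expand !horner_sum mulr_sumr.
apply: eq_bigr => s _; have [c [j [jb jn ->]]] := term_shape R s eirr noc.
rewrite !hornerE [(- t) ^+ _]exprNn.
have -> : (-1) ^+ (n - j.*2) = (-1) ^+ n :> R.
  by rewrite -signr_odd oddB // odd_double addbF signr_odd.
by rewrite /= mulrA [c * _]mulrC.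
Qed.

Lemma prod_neg_shift (R : realType) (s : seq R) u :
  (-1) ^+ size s * \prod_(x <- s) (- u - x) = \prod_(x <- s) (u + x).
Proof.
elim: s => [|x s IH]; first by rewrite !big_nil mulr1.
rewrite !big_cons /= exprS -IH.
by rewrite mulrACA mulN1r opprB opprK addrC.
Qed.

Lemma size_eig (R : realType) n (A : 'M[R]_n) (s : seq R) :
  char_poly A = \prod_(x <- s) ('X - x%:P) -> size s = n.
Proof.
move=> hs; have := size_char_poly A; rewrite hs size_prod_XsubC.
by move=> [].
Qed.

Lemma count_nz (R : realType) n (e : rel 'I_n) (s : seq R) :
  irreflexive e -> ~ has_cycle e ->
  char_poly (adj_mx R e) = \prod_(x <- s) ('X - x%:P) ->
  (count (fun x : R => x != 0%R) s <= (matching_number e).*2)%N.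
Proof.
move=> eirr noc hs.
have sz := size_eig hs.
have dv := X_dvd_char R eirr noc.
have nz : char_poly (adj_mx R e) != 0 by apply: monic_neq0; apply: char_poly_monic.
have := mup_geq 0 (n - (matching_number e).*2) nz.
rewrite polyC0 subr0 dv hs mu_prod_XsubC => le.
have := count_predC (pred1 0) s.
rewrite sz; move: le.
have -> : count (fun x : R => x != 0%R) s = count (predC (pred1 0)) s by [].
set a := count _ s; set b := count _ s.
lia.
Qed.

Lemma eig_sym (R : realType) n (e : rel 'I_n) (s : seq R) :
  irreflexive e -> ~ has_cycle e ->
  char_poly (adj_mx R e) = \prod_(x <- s) ('X - x%:P) ->
  perm_eq s (map -%R s).
Proof.
move=> eirr noc hs; have sz := size_eig hs.
apply: prod_XsubC_eq; rewrite -hs.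
apply: poly_eq_nonneg => t _.
have := @char_odd R n e (- t) eirr noc; rewrite opprK => ->.
rewrite hs !horner_prod big_map.
under eq_bigr do rewrite hornerXsubC.
rewrite -sz prod_neg_shift; apply: eq_bigr => x _.
by rewrite hornerXsubC opprK.
Qed.

Lemma char_sq (R : realType) n (A : 'M[R]_n) (s : seq R) :
  char_poly A = \prod_(x <- s) ('X - x%:P) ->
  char_poly (A *m A) = \prod_(x <- map (fun x => x ^+ 2) s) ('X - x%:P).
Proof.
move=> hs; have sz := size_eig hs.
apply: poly_eq_nonneg => t t0.
set u := Num.sqrt t.
have tu : t = u * u by rewrite -expr2 sqr_sqrtr.
rewrite horner_char horner_prod big_map.
under eq_bigr do rewrite hornerXsubC.
have -> : t%:M - A *m A = (u%:M - A) *m (u%:M + A).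
  rewrite mulmxDr !mulmxBl -scalar_mxM -tu mul_scalar_mx mul_mx_scalar.
  by rewrite addrA subrK.
have -> : u%:M + A = (-1) *: ((- u)%:M - A).
  by apply/matrixP => i j; rewrite !mxE; case: (i == j) => /=; ring.
rewrite det_mulmx detZ -!horner_char hs !horner_prod.
under eq_bigr do rewrite hornerXsubC.
under [X in _ * (_ * X)]eq_bigr do rewrite hornerXsubC.
rewrite -sz prod_neg_shift -big_split /=.
by apply: eq_bigr => x _; rewrite tu; ring.
Qed.

Lemma trace_sq (R : realType) n (e : rel 'I_n) :
  symmetric e ->
  \tr (adj_mx R e *m adj_mx R e) = (\sum_i #|[set u in setT | e i u]|)%:R.
Proof.
move=> esym; rewrite /mxtrace natr_sum; apply: eq_bigr => i _.
rewrite mxE card_pred_sum natr_sum; apply: eq_big => [j|j _]; first by rewrite inE.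
by rewrite !mxE (esym j i); case: (e i j); rewrite /= ?mulr1 ?mulr0.
Qed.

Lemma sumsq_eig (R : realType) n (e : rel 'I_n) (s : seq R) :
  irreflexive e -> symmetric e -> ~ has_cycle e -> (0 < n)%N ->
  char_poly (adj_mx R e) = \prod_(x <- s) ('X - x%:P) ->
  \sum_(x <- s) x ^+ 2 <= (2 * (n - 1))%:R.
Proof.
move=> eirr esym noc n0 hs; have sz := size_eig hs.
have hq := char_sq hs.
have ht := char_poly_trace (adj_mx R e *m adj_mx R e) n0; rewrite hq in ht.
have ht' : (\prod_(x <- [seq x ^+ 2 | x <- s]) ('X - x%:P))`_((size [seq x ^+ 2 | x <- s]).-1)
   = - \tr (adj_mx R e *m adj_mx R e) by rewrite size_map sz.
rewrite coefPn_prod_XsubC in ht'; last by rewrite size_map sz -lt0n.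
move/oppr_inj: ht'; rewrite big_map => ->.
rewrite trace_sq // ler_nat.
have := edge_sum esym eirr noc (V := setT) _.
rewrite cardsT card_ord => h.
have h' : [set: 'I_n] != set0 by apply/set0Pn; exists (Ordinal n0); rewrite inE.
apply: leq_trans (h h'); apply: eq_leq; apply: eq_big => // v; by rewrite inE.
Qed.

Lemma cs_seq (R : realType) (r : seq nat) (P : pred nat) (f : nat -> R) :
  (\sum_(i <- r | P i) f i) ^+ 2 <= (count P r)%:R * \sum_(i <- r | P i) f i ^+ 2.
Proof.
elim: r => [|x r IH]; first by rewrite !big_nil /= expr2 mulr0.
rewrite !big_cons /=; case: (P x) => //=.
set S := \sum_(i <- r | P i) f i; set Q := \sum_(i <- r | P i) f i ^+ 2.
set c : R := (count P r)%:R; set a := f x.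
have IH' : S ^+ 2 <= c * Q := IH.
have Q0 : 0 <= Q by apply: sumr_ge0 => i _; apply: sqr_ge0.
have c0 : 0 <= c by apply: ler0n.
rewrite natrD -/c.
have [c00|cpos] := eqVneq c 0.
  move: IH'; rewrite c00 mul0r => IH2.
  have S0 : S = 0 by apply/eqP; rewrite -sqrf_eq0 eq_le IH2 sqr_ge0.
  rewrite S0; nra.
have cp : 0 < c by rewrite lt_def cpos c0.
clear IH.
have key : 2 * a * S <= c * a ^+ 2 + Q.
  rewrite -(ler_pM2l cp).
  have h1 := sqr_ge0 (c * a - S).
  have e1 : c * (c * a ^+ 2 + Q) - c * (2 * a * S) = (c * a - S) ^+ 2 + (c * Q - S ^+ 2) by ring.
  rewrite -subr_ge0 e1; apply: addr_ge0 => //; rewrite subr_ge0 //.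
have e2 : (1 + c) * (a ^+ 2 + Q) - (a + S) ^+ 2 = (c * a ^+ 2 + Q - 2 * a * S) + (c * Q - S ^+ 2) by ring.
rewrite -subr_ge0 e2; apply: addr_ge0; rewrite subr_ge0 //.
Qed.

Lemma sqrt_bound (R : realType) (T Q N : R) (c c' : nat) :
  T ^+ 2 <= c%:R * Q -> 0 <= Q -> Q <= N -> (c <= c')%N ->
  T <= Num.sqrt (c'%:R * N).
Proof.
move=> h Q0 QN cc.
apply: le_trans (ler_norm T) _; rewrite -sqrtr_sqr.
apply: ler_wsqrtr; apply: (le_trans h); apply: ler_pM => //.
  by rewrite ler_nat.
Qed.

Lemma final_ineq (R : realType) (s : seq R) n k b (N : R) :
  size s = n -> (k <= n)%N -> \sum_(x <- s) x = 0 ->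
  (count (fun x : R => (0 < x)%R) s <= b)%N ->
  \sum_(x <- s | 0 < x) x ^+ 2 <= N -> \sum_(x <- s | x < 0) x ^+ 2 <= N ->
  Ssum s k <= Num.sqrt ((minn k b)%:R * N) /\
  Ssum s k <= Num.sqrt ((n - k)%:R * N).
Proof.
move=> sz kn s0 cb QP QN.
have Sk : Ssum s k = \sum_(i <- iota 0 k) s`_i.
  by rewrite /Ssum -(big_mkord xpredT (fun i => s`_i)) /index_iota subn0.
have toS : forall (P : pred R) (g : R -> R),
    \sum_(i <- iota 0 n | P s`_i) g s`_i = \sum_(x <- s | P x) g x.
  by move=> P g; rewrite [RHS](big_nth 0) /index_iota subn0 sz.
have cntS : forall (P : pred R), count (fun i => P s`_i) (iota 0 n) = count P s.
  by move=> P; rewrite -[in RHS](mkseq_nth 0 s) /mkseq count_map sz.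
have split_n : iota 0 n = iota 0 k ++ iota k (n - k) by rewrite -iotaD subnKC.
split.
  rewrite Sk (bigID (fun i => 0 < s`_i)) /=.
  set T := \sum_(i <- iota 0 k | 0 < s`_i) s`_i.
  have neg : \sum_(i <- iota 0 k | ~~ (0 < s`_i)) s`_i <= 0.
    by apply: sumr_le0 => i; rewrite -leNgt.
  apply: (le_trans (lerD (lexx T) neg)); rewrite addr0.
  apply: (sqrt_bound (cs_seq _ _ _)).
  - by apply: sumr_ge0 => i _; apply: sqr_ge0.
  - apply: le_trans QP; rewrite -(toS (fun x => 0 < x) (fun x => x ^+ 2)) split_n big_cat /=.
    rewrite lerDl; by apply: sumr_ge0 => i _; apply: sqr_ge0.
  - rewrite leq_min; apply/andP; split.
      by apply: leq_trans (count_size _ _) _; rewrite size_iota.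
    apply: leq_trans cb; rewrite -(cntS (fun x => 0 < x)) split_n count_cat.
    exact: leq_addr.
have tot : \sum_(i <- iota 0 n) s`_i = 0.
  by rewrite -[in RHS]s0; apply: (toS xpredT id).
rewrite Sk.
have -> : \sum_(i <- iota 0 k) s`_i = \sum_(i <- iota k (n - k)) - s`_i.
  move: tot; rewrite split_n big_cat /= sumrN => /eqP; rewrite addr_eq0 => /eqP //.
rewrite (bigID (fun i => s`_i < 0)) /=.
set T := \sum_(i <- iota k (n - k) | s`_i < 0) - s`_i.
have neg : \sum_(i <- iota k (n - k) | ~~ (s`_i < 0)) - s`_i <= 0.
  by apply: sumr_le0 => i; rewrite -leNgt oppr_le0.
apply: (le_trans (lerD (lexx T) neg)); rewrite addr0.
apply: (sqrt_bound (cs_seq _ _ _)).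
- by apply: sumr_ge0 => i _; apply: sqr_ge0.
- apply: le_trans QN; rewrite -(toS (fun x => x < 0) (fun x => x ^+ 2)) split_n big_cat /=.
  under [X in _ <= _ + X]eq_bigr do rewrite -sqrrN.
  rewrite lerDr; by apply: sumr_ge0 => i _; apply: sqr_ge0.
- by apply: leq_trans (count_size _ _) _; rewrite size_iota.
Qed.

Theorem corollary4p1 (R : realType) (n : nat) (e : rel 'I_n) (s : seq R)
  (k : nat) :
  is_tree e ->
  eigenvalues_desc (adj_mx R e) s ->
  (1 <= k <= n)%N ->
  Ssum s k <=
    (if (k <= matching_number e)%N then Num.sqrt ((k * (n - 1))%:R)
     else if (k <= n - matching_number e)%N
          then Num.sqrt ((matching_number e * (n - 1))%:R)
          else Num.sqrt (((n - k) * (n - 1))%:R)).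
Proof.
move=> [n0 [esym eirr] _ noc] [_ hs] /andP[k1 kn].
set b := matching_number e.
have sz := size_eig hs.
have cnz : (count (fun x : R => x != 0%R) s <= b.*2)%N := count_nz eirr noc hs.
have ps := eig_sym eirr noc hs.
have sq := sumsq_eig eirr esym noc n0 hs.
have cpn : count (fun x : R => (0 < x)%R) s = count (fun x : R => (x < 0)%R) s.
  rewrite ((seq.permP ps) _) count_map; apply: eq_count => x /=.
  by rewrite oppr_gt0.
have cpos : (count (fun x : R => (0 < x)%R) s <= b)%N.
  have := count_predUI (fun x : R => (0 < x)%R) (fun x : R => (x < 0)%R) s.
  have -> : count (predI (fun x : R => (0 < x)%R) (fun x : R => (x < 0)%R)) s = 0%N.
    apply/eqP; rewrite -leqn0 leqNgt -has_count; apply/hasPn => x _ /=.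
    by apply/negP => /andP[a c]; have := lt_trans a c; rewrite ltxx.
  have -> : count (predU (fun x : R => (0 < x)%R) (fun x : R => (x < 0)%R)) s =
            count (fun x : R => x != 0%R) s.
    by apply: eq_count => x /=; case: ltgtP.
  rewrite addn0 -cpn => h; move: cnz; rewrite h addnn leq_double //.
have s0 : \sum_(x <- s) x = 0.
  have h : \sum_(x <- s) x = \sum_(x <- map -%R s) x by apply: perm_big.
  move: h; rewrite big_map sumrN => h; lra.
have QPN : \sum_(x <- s | 0 < x) x ^+ 2 = \sum_(x <- s | x < 0) x ^+ 2.
  rewrite (perm_big _ ps) big_map; apply: eq_big => x /=; first by rewrite oppr_gt0.
  by rewrite sqrrN.
have Qsum : \sum_(x <- s | 0 < x) x ^+ 2 + \sum_(x <- s | x < 0) x ^+ 2 <=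
            \sum_(x <- s) x ^+ 2.
  rewrite [X in _ <= X](bigID (fun x => 0 < x)) /= lerD2l.
  rewrite [X in _ <= X](bigID (fun x => x < 0)) /=.
  rewrite (eq_bigl (fun x => ~~ (0 < x) && (x < 0))); last first.
    by move=> x; case: (ltP x 0) => x0 /=; rewrite ?andbT ?andbF // -leNgt ltW.
  by rewrite lerDl; apply: sumr_ge0 => x _; apply: sqr_ge0.
have QP : \sum_(x <- s | 0 < x) x ^+ 2 <= (n - 1)%:R.
  move: Qsum sq; rewrite -QPN natrM; lra.
have QN : \sum_(x <- s | x < 0) x ^+ 2 <= (n - 1)%:R by rewrite -QPN.
have [A B] := final_ineq sz kn s0 cpos QP QN.
rewrite !natrM.
case: ifP => h1.
  by move: A; rewrite (minn_idPl h1).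
case: ifP => h2 //.
have hb : (b <= k)%N by rewrite ltnW // ltnNge h1.
by move: A; rewrite (minn_idPr hb).
Qed.
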